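(* For every integer $n\ge1$ there are real constants $c_{kj}$, $1\le k\le n$, $1\le j\le n+1$, such that for every $w,w_0\in\mathbb{C}$ the following identity holds: $$\langle w^n(w-w_0)\rangle=\langle w_0w^n\rangle+\langle w_0^n(w-w_0)\rangle+\sum_{k=1}^n\sum_{j=1}^{n+1}c_{kj}\langle w_0\rangle^{n+1-j}\int_0^1\langle w-w_0t\rangle^j(1-t)^{k-1}\,dt.$$
   Context: For $w\in\mathbb{C}\setminus\{0\}$, $\langle w\rangle:=\overline w/w$ denotes the phase function; the identity is understood for $w,w_0$ such that the phase functions involved are defined (in particular $w_0\ne0$, $w\ne0$, $w\ne w_0$). *)

(* Defs.v *)
From HB Require Import structures.
From mathcomp Require Import all_boot all_order all_algebra.
From mathcomp Require Import all_classical all_reals all_analysis.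
From mathcomp Require Import complex.
Set Implicit Arguments. Unset Strict Implicit. Unset Printing Implicit Defensive.
Import Order.TTheory GRing.Theory Num.Theory.
Local Open Scope ring_scope.
Local Open Scope complex_scope.

(* phase function <w> := conj(w)/w  (only used for w <> 0 in the statement;
   mathcomp's total inverse gives <0> = 0, irrelevant on a null set). *)
Definition phase (R : rcfType) (w : R[i]) : R[i] := (w^* / w)%R.

Definition cint01 (R : realType) (f : R -> R[i]) : R[i] :=
  ((Rintegral lebesgue_measure `[0%R, 1%R] (fun t => complex.Re (f t)))
   +i* (Rintegral lebesgue_measure `[0%R, 1%R] (fun t => complex.Im (f t))))%C.

(* Main.v *)
Require Import Defs.
From HB Require Import structures.
From mathcomp Require Import all_boot all_order all_algebra.
From mathcomp Require Import all_classical all_reals all_analysis.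
From mathcomp Require Import complex.
From mathcomp Require Import ring lra zify.
From mathcomp Require Import measurable_realfun lebesgue_integral_nonneg.
Import Order.TTheory GRing.Theory Num.Theory.
Import numFieldNormedType.Exports.
Local Open Scope ring_scope.
Local Open Scope complex_scope.
Set Implicit Arguments.
Section S.
Variable R : realType.
Definition cder (f g : R -> R[i]) := forall x : R,
  is_derive x 1 (fun t => complex.Re (f t)) (complex.Re (g x)) /\
  is_derive x 1 (fun t => complex.Im (f t)) (complex.Im (g x)).

Lemma ReM (x y : R[i]) : complex.Re (x * y) = complex.Re x * complex.Re y - complex.Im x * complex.Im y.
Proof. by case: x => a b; case: y => c d. Qed.
Lemma ImM (x y : R[i]) : complex.Im (x * y) = complex.Re x * complex.Im y + complex.Im x * complex.Re y.
Proof. by case: x => a b; case: y => c d. Qed.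
Lemma ReV (x : R[i]) : complex.Re (x^-1) = complex.Re x / (complex.Re x ^+ 2 + complex.Im x ^+ 2).
Proof. by case: x => a b. Qed.
Lemma ImV (x : R[i]) : complex.Im (x^-1) = - complex.Im x / (complex.Re x ^+ 2 + complex.Im x ^+ 2).
Proof. case: x => a b /=. by rewrite mulNr. Qed.
Lemma ReD (x y : R[i]) : complex.Re (x + y) = complex.Re x + complex.Re y.
Proof. by case: x => a b; case: y => c d. Qed.
Lemma ImD (x y : R[i]) : complex.Im (x + y) = complex.Im x + complex.Im y.
Proof. by case: x => a b; case: y => c d. Qed.

Lemma cder_cst c : cder (fun _ => c) (fun _ => 0).
Proof. move=> x; split; exact: is_derive_cst. Qed.

Lemma cder_id : cder (fun t => t%:C) (fun _ => 1).
Proof. move=> x; split => /=. exact: is_derive_id. exact: is_derive_cst. Qed.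

Lemma cder_add f f' g g' : cder f f' -> cder g g' ->
  cder (fun t => f t + g t) (fun t => f' t + g' t).
Proof.
move=> hf hg x; have [f1 f2] := hf x; have [g1 g2] := hg x; split.
- rewrite (_ : (fun t => complex.Re (f t + g t)) = (fun t => complex.Re (f t)) + (fun t => complex.Re (g t))); last by apply/funext => t; rewrite ReD.
  rewrite ReD; exact: is_deriveD.
- rewrite (_ : (fun t => complex.Im (f t + g t)) = (fun t => complex.Im (f t)) + (fun t => complex.Im (g t))); last by apply/funext => t; rewrite ImD.
  rewrite ImD; exact: is_deriveD.
Qed.

Lemma cder_mul f f' g g' : cder f f' -> cder g g' ->
  cder (fun t => f t * g t) (fun t => f' t * g t + f t * g' t).
Proof.
move=> hf hg x; have [f1 f2] := hf x; have [g1 g2] := hg x; split.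
- rewrite (_ : (fun t => complex.Re (f t * g t)) = (fun t => complex.Re (f t)) * (fun t => complex.Re (g t)) - (fun t => complex.Im (f t)) * (fun t => complex.Im (g t))); last by apply/funext => t; rewrite ReM.
  apply: is_derive_eq. rewrite ReD !ReM /GRing.scale /=. ring.
- rewrite (_ : (fun t => complex.Im (f t * g t)) = (fun t => complex.Re (f t)) * (fun t => complex.Im (g t)) + (fun t => complex.Im (f t)) * (fun t => complex.Re (g t))); last by apply/funext => t; rewrite ImM.
  apply: is_derive_eq. rewrite ImD !ImM /GRing.scale /=. ring.
Qed.
Lemma is_derive_ext (f g : R -> R) (x d d' : R) : is_derive x 1 f d ->
  (forall t, f t = g t) -> d = d' -> is_derive x 1 g d'.
Proof. by move=> h /funext <- <-. Qed.

Lemma is_deriveV' (f : R -> R) x (df : R) : f x != 0 -> is_derive x 1 f df ->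
  is_derive x 1 (fun y => (f y)^-1) (- (f x) ^- 2 *: df).
Proof.
move=> fx0 hd; have dd : derivable f x 1 by exact: ex_derive.
apply: DeriveDef; first by apply: derivableV.
by rewrite deriveV // derive_val.
Qed.

Lemma normc2_neq0 (z : R[i]) : z != 0 -> complex.Re z ^+ 2 + complex.Im z ^+ 2 != 0.
Proof.
case: z => a b /= hz; apply/negP => /eqP h.
move: h; move=> /eqP; rewrite paddr_eq0 ?sqr_ge0 // !sqrf_eq0 => /andP[/eqP ea /eqP eb].
by move: hz; rewrite ea eb eqxx.
Qed.

Lemma inv_der_Re (z z' : R[i]) : z != 0 ->
  let N := complex.Re z ^+ 2 + complex.Im z ^+ 2 in
  complex.Re z * (- N ^- 2 * (complex.Re z * complex.Re z' + complex.Re z * complex.Re z' + (complex.Im z * complex.Im z' + complex.Im z * complex.Im z')))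
   + N^-1 * complex.Re z' = complex.Re (- z' / z ^+ 2).
Proof.
move=> /normc2_neq0; case: z => a b; case: z' => c d /= hN.
field; rewrite hN andbT.
have -> : (a * a - b * b) ^+ 2 + (a * b + b * a) ^+ 2 = (a ^+ 2 + b ^+ 2) ^+ 2 by ring.
by rewrite expf_neq0.
Qed.

Lemma inv_der_Im (z z' : R[i]) : z != 0 ->
  let N := complex.Re z ^+ 2 + complex.Im z ^+ 2 in
  - complex.Im z * (- N ^- 2 * (complex.Re z * complex.Re z' + complex.Re z * complex.Re z' + (complex.Im z * complex.Im z' + complex.Im z * complex.Im z')))
   + N^-1 * - complex.Im z' = complex.Im (- z' / z ^+ 2).
Proof.
move=> /normc2_neq0; case: z => a b; case: z' => c d /= hN.
field; rewrite hN andbT.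
have -> : (a * a - b * b) ^+ 2 + (a * b + b * a) ^+ 2 = (a ^+ 2 + b ^+ 2) ^+ 2 by ring.
by rewrite expf_neq0.
Qed.

Lemma cder_inv f f' : (forall t, f t != 0) -> cder f f' ->
  cder (fun t => (f t)^-1) (fun t => - f' t / (f t) ^+ 2).
Proof.
move=> nz hf x; have [f1 f2] := hf x.
pose N := fun t => complex.Re (f t) ^+ 2 + complex.Im (f t) ^+ 2.
have hN : is_derive x 1 N (complex.Re (f x) *: complex.Re (f' x) + complex.Re (f x) *: complex.Re (f' x) + (complex.Im (f x) *: complex.Im (f' x) + complex.Im (f x) *: complex.Im (f' x))).
  rewrite /N (_ : (fun t => _) = (fun t => complex.Re (f t)) * (fun t => complex.Re (f t)) + (fun t => complex.Im (f t)) * (fun t => complex.Im (f t))); last by apply/funext => t; rewrite /= !expr2.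
  exact: (is_deriveD (is_deriveM f1 f1) (is_deriveM f2 f2)).
have Nx : N x != 0 by apply: normc2_neq0.
have hV := @is_deriveV' N x _ Nx hN.
split.
- apply: (@is_derive_ext _ (fun t => complex.Re ((f t)^-1)) _ _ _ (is_deriveM f1 hV)).
    by move=> t /=; rewrite ReV.
  by rewrite -inv_der_Re.
- apply: (@is_derive_ext _ (fun t => complex.Im ((f t)^-1)) _ _ _ (is_deriveM (is_deriveN f2) hV)).
    by move=> t /=; rewrite ImV.
  by rewrite -inv_der_Im.
Qed.

Lemma cder_ext f g f2 g2 : cder f g -> (forall t, f t = f2 t) -> (forall t, g t = g2 t) -> cder f2 g2.
Proof. by move=> h /funext <- /funext <-. Qed.

Lemma cder_pow f f' k : cder f f' ->
  cder (fun t => f t ^+ k) (fun t => k%:R * f t ^+ k.-1 * f' t).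
Proof.
move=> hf; elim: k => [|k IH].
  apply: cder_ext (cder_cst 1) _ _ => t; by rewrite ?expr0 ?mul0r.
apply: cder_ext (cder_mul hf IH) _ _.
  by move=> t; rewrite exprS.
move=> t; case: k {IH} => [|k] /=; rewrite ?expr0 ?exprS; ring.
Qed.

Lemma cder_sum (I : Type) (r : seq I) (P : pred I) (F F' : I -> R -> R[i]) :
  (forall i, cder (F i) (F' i)) ->
  cder (fun t => \sum_(i <- r | P i) F i t) (fun t => \sum_(i <- r | P i) F' i t).
Proof.
move=> hF; elim: r => [|i r IH].
  by apply: cder_ext (cder_cst 0) _ _ => t; rewrite big_nil.
case Pi: (P i).
  by apply: cder_ext (cder_add (hF i) IH) _ _ => t; rewrite big_cons Pi.
by apply: cder_ext IH _ _ => t; rewrite big_cons Pi.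
Qed.

Lemma cder_cont f g : cder f g ->
  continuous (fun t : R => complex.Re (f t)) /\ continuous (fun t : R => complex.Im (f t)).
Proof.
move=> h; split => x; have [h1 h2] := h x; apply: differentiable_continuous;
  apply/derivable1_diffP; exact: ex_derive.
Qed.

Lemma rftc (F f : R -> R) : (forall x : R, is_derive x 1 F (f x)) -> continuous f ->
  Rintegral lebesgue_measure `[0%R, 1%R] f = F 1 - F 0.
Proof.
move=> hF cf.
have cF : forall x, {for x, continuous F}.
  move=> x; apply: differentiable_continuous; apply/derivable1_diffP; exact: ex_derive.
have := @continuous_FTC2 R f F 0 1 ltr01.
rewrite /Rintegral => ->.
- by [].
- by apply: continuous_subspaceT.
- split.
  + by move=> x _; exact: ex_derive.
  + exact/cvg_at_right_filter/cF.
  + exact/cvg_at_left_filter/cF.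
- by move=> x _; rewrite derive1E derive_val.
Qed.

Lemma cftc F g g2 : cder F g -> cder g g2 -> cint01 g = F 1 - F 0.
Proof.
move=> hF hg; rewrite /cint01; have [c1 c2] := cder_cont hg.
have d1 : forall x : R, is_derive x 1 (fun t => complex.Re (F t)) (complex.Re (g x)) by move=> x; case: (hF x).
have d2 : forall x : R, is_derive x 1 (fun t => complex.Im (F t)) (complex.Im (g x)) by move=> x; case: (hF x).
rewrite (rftc d1 c1) (rftc d2 c2).
by case: (F 1) => ? ?; case: (F 0) => ? ?.
Qed.

Definition nice (f : R -> R[i]) := exists g, cder f g.

Lemma nice_integrable (f : R -> R[i]) : nice f ->
  lebesgue_measure.-integrable `[0%R, 1%R] (EFin \o (fun t => complex.Re (f t))) /\
  lebesgue_measure.-integrable `[0%R, 1%R] (EFin \o (fun t => complex.Im (f t))).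
Proof.
move=> [g hg]; have [c1 c2] := cder_cont hg.
split; apply: continuous_compact_integrable; try exact: segment_compact;
  exact: continuous_subspaceT.
Qed.

Lemma cintD f g : nice f -> nice g -> cint01 (fun t => f t + g t) = cint01 f + cint01 g.
Proof.
move=> nf ng; have [f1 f2] := nice_integrable nf; have [g1 g2] := nice_integrable ng.
rewrite /cint01.
under eq_Rintegral do rewrite ReD.
under [X in _ +i* X]eq_Rintegral do rewrite ImD.
rewrite RintegralD // RintegralD //.
Qed.

Lemma cintZ c f : nice f -> cint01 (fun t => c * f t) = c * cint01 f.
Proof.
move=> nf; have [f1 f2] := nice_integrable nf.
rewrite /cint01.
under eq_Rintegral do rewrite ReM.
under [X in _ +i* X]eq_Rintegral do rewrite ImM.
have iZ : forall (k : R) (h : R -> R), lebesgue_measure.-integrable `[0%R, 1%R] (EFin \o h) ->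
    lebesgue_measure.-integrable `[0%R, 1%R] (EFin \o (fun x => k * h x)).
  move=> k h ih; rewrite (_ : _ \o _ = (fun x => (k%:E * (EFin \o h) x)%E)).
    exact: integrableZl.
  by apply/funext => x /=; rewrite EFinM.
rewrite RintegralB //; try exact: iZ.
rewrite RintegralD //; try exact: iZ.
rewrite !RintegralZl //.
by case: c => a b /=.
Qed.

Lemma nice_add f g : nice f -> nice g -> nice (fun t => f t + g t).
Proof. by move=> [f' hf] [g' hg]; exists (fun t => f' t + g' t); exact: cder_add. Qed.

Lemma nice_scale c f : nice f -> nice (fun t => c * f t).
Proof. move=> [f' hf]; eexists; exact: cder_mul (cder_cst c) hf. Qed.

Lemma nice_sum (I : Type) (r : seq I) (P : pred I) (F : I -> R -> R[i]) :
  (forall i, nice (F i)) -> nice (fun t => \sum_(i <- r | P i) F i t).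
Proof.
move=> hF; have /choice [F' hF'] : forall i, exists g, cder (F i) g by [].
by eexists; exact: cder_sum.
Qed.

Lemma cint0 : cint01 (fun _ : R => (0 : R[i])) = 0.
Proof.
rewrite /cint01 /= !Rintegral_cst //= mul0r //.
Qed.

Lemma cint_sum (I : Type) (r : seq I) (P : pred I) (a : I -> R[i]) (F : I -> R -> R[i]) :
  (forall i, nice (F i)) ->
  \sum_(i <- r | P i) a i * cint01 (F i) = cint01 (fun t => \sum_(i <- r | P i) a i * F i t).
Proof.
move=> hF; elim: r => [|i r IH].
  rewrite big_nil (_ : (fun t => _) = fun _ : R => (0 : R[i])) ?cint0 //.
  by apply/funext => t; rewrite big_nil.
rewrite big_cons; case Pi: (P i).
  rewrite IH -cintZ // -cintD //; last 2 first.
    exact: nice_scale.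
    by apply: nice_sum => j; exact: nice_scale.
  by congr cint01; apply/funext => t; rewrite big_cons Pi.
by rewrite IH; congr cint01; apply/funext => t; rewrite big_cons Pi.
Qed.

Lemma rint_ae (F G : R -> R) (s : R) : continuous G -> (forall t, t != s -> F t = G t) ->
  Rintegral lebesgue_measure `[0%R, 1%R] F = Rintegral lebesgue_measure `[0%R, 1%R] G.
Proof.
move=> cG hFG; rewrite /Rintegral; congr fine.
have mD : measurable (`[0%R, 1%R] `\ s) by apply: measurableD.
have mG : measurable_fun (`[0%R, 1%R] `\ s : set R) (fun t : R => (G t)%:E).
  apply/measurable_EFinP; apply: measurable_funTS; exact: continuous_measurable_fun.
have mF : measurable_fun (`[0%R, 1%R] `\ s : set R) (fun t : R => (F t)%:E).
  apply: eq_measurable_fun mG => t; rewrite inE => -[_ /eqP ts] /=; rewrite hFG //.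
rewrite -(integral_setD1 mD mF) -(integral_setD1 mD mG).
apply: eq_integral => t; rewrite inE => -[_ /eqP ts] /=; by rewrite hFG.
Qed.

Lemma cint_ae f g (s : R) : nice g -> (forall t, t != s -> f t = g t) -> cint01 f = cint01 g.
Proof.
move=> [g' hg] hfg; have [c1 c2] := cder_cont hg; rewrite /cint01.
rewrite (@rint_ae (fun t => complex.Re (f t)) _ s c1); last by move=> t /hfg ->.
by rewrite (@rint_ae (fun t => complex.Im (f t)) _ s c2); last by move=> t /hfg ->.
Qed.
End S.
Arguments cder {R}.
Arguments nice {R}.
Arguments cder_cst {R}.
Arguments cder_id {R}.

Set Implicit Arguments.
Section S2.
Variable R : realType.

Lemma binom1 (x y : R[i]) n :
  \sum_(1 <= k < n.+1) 'C(n, k)%:R * x ^+ (n - k) * y ^+ k = (x + y) ^+ n - x ^+ n.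
Proof.
rewrite exprDn big_ord_recl /= subn0 expr0 mulr1 bin0 mulr1n addrC addKr.
rewrite big_add1 /= big_mkord; apply: eq_bigr => i _.
rewrite /bump /= add1n -mulr_natl; ring.
Qed.

Definition cc (n k j : nat) : R := ((k * 'C(n, k) * 'C(k.+1, j))%:R * (-1) ^+ (k.+1 - j)).

Lemma lemA n k (b x : R[i]) : (1 <= k <= n)%N ->
  \sum_(1 <= j < n.+2) (cc n k j)%:C * b ^+ (n.+1 - j) * x ^+ j =
  (k * 'C(n, k))%:R * b ^+ (n - k) * ((x - b) ^+ k.+1 - (- b) ^+ k.+1).
Proof.
move=> /andP[k1 kn].
rewrite [x - b]addrC -(binom1 (- b) x k.+1) mulr_sumr.
rewrite (big_cat_nat (n := k.+2)) //=; try lia.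
rewrite [X in _ + X]big_nat_cond [X in _ + X]big1 ?addr0; last first.
  move=> j /andP[/andP[hj _] _].
  by rewrite /cc (@bin_small k.+1 j) // muln0 mul0r rmorph0 !mul0r.
apply: eq_big_nat => j /andP[j1 jk].
have e : (n.+1 - j = (n - k) + (k.+1 - j))%N by lia.
rewrite /cc e exprD (exprNn b) rmorphM rmorphXn rmorphN1 rmorph_nat !natrM; ring.
Qed.
End S2.

Set Implicit Arguments.
Section S4.
Variable R : realType.

Lemma phaseM (x y : R[i]) : phase (x * y) = phase x * phase y.
Proof. by rewrite /phase rmorphM invfM mulrACA. Qed.

Lemma phaseX (x : R[i]) n : phase (x ^+ n) = phase x ^+ n.
Proof. by rewrite /phase rmorphXn exprMn exprVn. Qed.

Lemma conjC_real (t : R) : (t%:C)^* = t%:C.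
Proof. exact: conjc_real. Qed.

Lemma phase_z (w w0 : R[i]) (t : R) :
  phase (w - w0 * t%:C) = (w^* - w0^* * t%:C) / (w - w0 * t%:C).
Proof.
rewrite /phase; congr (_ / _); case: w => a b; case: w0 => c d /=.
apply/eqP; rewrite eq_complex /=; apply/andP; split; apply/eqP; ring.
Qed.

Lemma cder_aff (al be : R[i]) : cder (fun t : R => al + be * t%:C) (fun _ => be).
Proof.
apply: cder_ext (cder_add (cder_cst al) (cder_mul (cder_cst be) cder_id)) _ _ => t //.
by rewrite add0r mul0r add0r mulr1.
Qed.

Lemma onemC (t : R) m : ((1 - t) ^+ m)%:C = (1 + (-1) * t%:C) ^+ m.
Proof. by rewrite rmorphXn rmorphB rmorph1 mulN1r. Qed.

Lemma cder_onem m : cder (fun t : R => ((1 - t) ^+ m)%:C)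
   (fun t => m%:R * (1 + (-1) * t%:C) ^+ m.-1 * (-1)).
Proof. apply: cder_ext (cder_pow m (cder_aff 1 (-1))) _ _ => t //; by rewrite onemC. Qed.

Lemma nice_onem m : nice (fun t : R => ((1 - t) ^+ m)%:C).
Proof. eexists; exact: cder_onem. Qed.

Lemma natC_neq0 k : (k.+1%:R : R[i]) != 0.
Proof. by rewrite pnatr_eq0. Qed.

Lemma cint_poly (c : R[i]) k :
  cint01 (fun t : R => c * ((1 - t) ^+ k)%:C) = c / k.+1%:R.
Proof.
have [g2 hg2] := nice_scale c (nice_onem k).
pose F := fun t : R => (- c / k.+1%:R) * (1 + (-1) * t%:C) ^+ k.+1.
have hF : cder F (fun t => c * ((1 - t) ^+ k)%:C).
  apply: cder_ext (cder_mul (cder_cst (- c / k.+1%:R)) (cder_pow k.+1 (cder_aff 1 (-1)))) _ _ => t //.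
  rewrite onemC /=; have := natC_neq0 k; move=> hk; field; by rewrite -natr1 addrC in hk.
rewrite (cftc hF hg2) /F.
by rewrite /= rmorph1 rmorph0 mulr0 addr0 expr1n mulN1r subrr expr0n /=; ring.
Qed.

Definition fkj (w w0 : R[i]) (j k : nat) :=
  fun t : R => phase (w - w0 * t%:C) ^+ j * ((1 - t) ^+ (k - 1))%:C.

Definition rhs_sum n (w w0 : R[i]) :=
  \sum_(1 <= k < n.+1) \sum_(1 <= j < n.+2)
     (cc R n k j)%:C * phase w0 ^+ (n.+1 - j) * cint01 (fkj w w0 j k).

Lemma sum_neg n (b : R[i]) : (1 <= n)%N ->
  \sum_(1 <= k < n.+1) 'C(n, k)%:R * b ^+ (n - k) * (- (- b) ^+ k.+1) = - b ^+ n.+1.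
Proof.
move=> n1.
transitivity (b * \sum_(1 <= k < n.+1) 'C(n, k)%:R * b ^+ (n - k) * (- b) ^+ k).
  rewrite mulr_sumr; apply: eq_bigr => k _; rewrite exprS; ring.
rewrite binom1 subrr expr0n eqn0Ngt n1 /= sub0r exprS; ring.
Qed.

Lemma deg_case n (w w0 : R[i]) : (1 <= n)%N -> w0 != 0 -> w != 0 -> w != w0 ->
  w^* * w0 - w0^* * w = 0 ->
  [/\ phase w = phase w0, phase (w - w0) = phase w0 & rhs_sum n w w0 = - phase w0 ^+ n.+1].
Proof.
move=> n1 hw0 hw hww0 /eqP; rewrite subr_eq0 => /eqP hD.
set b := phase w0.
have hp : forall t : R, t != complex.Re (w / w0) -> phase (w - w0 * t%:C) = b.
  move=> t ht; have hz : w - w0 * t%:C != 0.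
    apply: contra ht => /eqP hz0.
    have ew : w = w0 * t%:C by apply/eqP; rewrite -subr_eq0 hz0.
    by rewrite ew [w0 * _]mulrC mulfK.
  rewrite phase_z /b /phase; apply/eqP; rewrite eqr_div // ?conjc_eq0 //.
  apply/eqP; rewrite mulrBl hD; ring.
split.
- rewrite /b /phase; apply/eqP; rewrite eqr_div ?conjc_eq0 //; exact/eqP.
- have hz : w - w0 != 0 by rewrite subr_eq0.
  have := phase_z w w0 1; rewrite rmorph1 !mulr1 => ->.
  rewrite /b /phase; apply/eqP; rewrite eqr_div ?conjc_eq0 //.
  apply/eqP; rewrite mulrBl hD; ring.
rewrite /rhs_sum.
transitivity (\sum_(1 <= k < n.+1) 'C(n, k)%:R * b ^+ (n - k) * (- (- b) ^+ k.+1)); last exact: sum_neg.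
apply: eq_big_nat => k /andP[k1 kn].
transitivity (\sum_(1 <= j < n.+2) (cc R n k j)%:C * b ^+ (n.+1 - j) * b ^+ j / k%:R).
  apply: eq_bigr => j _.
  have -> : cint01 (fkj w w0 j k) = b ^+ j / k%:R.
    rewrite (@cint_ae _ _ (fun t => b ^+ j * ((1 - t) ^+ (k - 1))%:C) (complex.Re (w / w0))).
    - case: k k1 {kn} => // k _; rewrite cint_poly subn1 /=; by [].
    - exact: nice_scale _ (nice_onem _).
    - by move=> t ht; rewrite /fkj hp.
  by rewrite !mulrA.
rewrite -mulr_suml lemA; last by rewrite k1 -ltnS.
rewrite subrr expr0n /= sub0r natrM.
case: k k1 kn => // k _ _.
have := natC_neq0 k => hk; field; by rewrite -natr1 addrC in hk.
Qed.
End S4.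

Set Implicit Arguments.
Section S6.
Variable R : realType.

Lemma conj_mulr (x : R[i]) (t : R) : (x * t%:C)^* = x^* * t%:C.
Proof.
case: x => a b /=; apply/eqP; rewrite eq_complex /=; apply/andP; split; apply/eqP; ring.
Qed.

Lemma conj_sub (x y : R[i]) : (x - y)^* = x^* - y^*.
Proof.
case: x => a b; case: y => c d /=; apply/eqP; rewrite eq_complex /=; apply/andP; split; apply/eqP; ring.
Qed.

Variables (n : nat) (w w0 : R[i]).
Hypothesis n1 : (1 <= n)%N.
Hypothesis hw0 : w0 != 0.
Let D := w^* * w0 - w0^* * w.
Hypothesis hD : D != 0.
Let b := phase w0.

Lemma hz (t : R) : w - w0 * t%:C != 0.
Proof.
apply: contra hD => /eqP hz0.
have ew : w = w0 * t%:C by apply/eqP; rewrite -subr_eq0 hz0.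
rewrite /D ew; case: (w0) => a c /=; rewrite eq_complex /=; apply/andP; split; apply/eqP; ring.
Qed.

Let z := fun t : R => w + (- w0) * t%:C.
Lemma hz' (t : R) : z t != 0.
Proof. by rewrite /z mulNr; exact: hz. Qed.

Let q := fun t : R => (D / w0) * (z t)^-1.

Lemma hq (t : R) : phase (w - w0 * t%:C) - b = q t.
Proof.
have := hz t; rewrite phase_z /q /b /phase /z /D mulNr => h; field.
by rewrite h hw0.
Qed.

Lemma cder_q : cder q (fun t => D / w0 * (- (- w0) / z t ^+ 2)).
Proof.
have := cder_mul (cder_cst (D / w0)) (cder_inv hz' (@cder_aff R w (- w0))).
move/cder_ext; apply => t //.
by rewrite mul0r add0r.
Qed.


Let q1 := q 1.
Let m := fun t : R => q t * (1 + (-1) * t%:C).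

Lemma z1 : z 1 = w - w0.
Proof. by rewrite /z rmorph1 mulr1. Qed.

Lemma cder_m : cder m (fun t => - (q t) ^+ 2 / q1).
Proof.
have := cder_mul cder_q (@cder_aff R 1 (-1)).
move/cder_ext; apply => t //.
have h1 := hz' t; have h2 := hz' 1.
rewrite /q1 /q; move: h1 h2; rewrite z1 /z => h1 h2.
field; rewrite h2 hw0 hD /=; exact: h1.
Qed.

Lemma q1_neq0 : q1 != 0.
Proof. by rewrite /q1 /q mulf_neq0 ?invr_eq0 ?mulf_neq0 ?invr_eq0 ?hz'. Qed.

Lemma cder_ph : cder (fun t => phase (w - w0 * t%:C)) (fun t => D / w0 * (- (- w0) / z t ^+ 2)).
Proof.
have := cder_add (cder_cst b) cder_q.
move/cder_ext; apply => t; last by rewrite add0r.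
by rewrite -hq addrC subrK.
Qed.

Lemma nice_fkj j k : nice (fkj R w w0 j k).
Proof. eexists; exact: cder_mul (cder_pow j cder_ph) (cder_onem R (k - 1)). Qed.

Let a k j := (cc R n k j)%:C * b ^+ (n.+1 - j).
Let Hk k := fun t => \sum_(1 <= j < n.+2) a k j * fkj R w w0 j k t.
Let h := fun t => \sum_(1 <= k < n.+1) 1 * Hk k t.

Lemma RHS_eq : rhs_sum R n w w0 = cint01 h.
Proof.
rewrite /rhs_sum; transitivity (\sum_(1 <= k < n.+1) 1 * cint01 (Hk k)).
  apply: eq_bigr => k _; rewrite mul1r /Hk -cint_sum //; move=> j; exact: nice_fkj.
rewrite cint_sum //; move=> k; apply: nice_sum => j; apply: nice_scale; exact: nice_fkj.
Qed.

Let Gk k := fun t : R => 'C(n, k)%:R * b ^+ (n - k) *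
   (- q1 * m t ^+ k + (- b) ^+ k.+1 * (1 + (-1) * t%:C) ^+ k).
Let G := fun t : R => \sum_(1 <= k < n.+1) Gk k t.

Lemma cder_Gk k : (1 <= k <= n)%N -> cder (Gk k) (fun t => 1 * Hk k t).
Proof.
move=> /andP[k1 kn].
have := cder_mul (cder_cst ('C(n, k)%:R * b ^+ (n - k)))
   (cder_add (cder_mul (cder_cst (- q1)) (cder_pow k cder_m))
             (cder_mul (cder_cst ((- b) ^+ k.+1)) (cder_pow k (@cder_aff R 1 (-1))))).
move/cder_ext; apply => t //.
rewrite /Hk.
under eq_bigr do rewrite /fkj /a mulrA.
rewrite -mulr_suml lemA; last by rewrite k1.
rewrite hq onemC /m.
case: k k1 kn => // k _ _.
rewrite subn1 /= exprMn (exprS (q t) k.+1) (exprS (q t) k) natrM.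
have := q1_neq0 => hq1.
have e : forall x y : R[i], - q1 * (x * (- y / q1)) = x * y by move=> x y; field.
rewrite e; move: (q t) (1 + -1 * t%:C) (- b) ('C(n, k.+1)%:R) (b ^+ (n - k.+1)) => Q X B C1 C2.
rewrite exprMn !(exprS X k); move: (Q ^+ k) (X ^+ k) (B ^+ k.+2) (k.+1%:R : R[i]) => Qk Xk Bk K; ring.
Qed.

Lemma cder_G : cder G h.
Proof.
pose F k := if (1 <= k <= n)%N then Gk k else (fun _ => 0).
pose F' k := if (1 <= k <= n)%N then (fun t => 1 * Hk k t) else (fun _ => 0).
have hF : forall k, cder (F k) (F' k).
  move=> k; rewrite /F /F'; case: ifP => hk; [exact: cder_Gk | exact: cder_cst].
have := @cder_sum R nat (index_iota 1 n.+1) predT F F' hF.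
move/cder_ext; apply => t.
- apply: eq_big_nat => k hk; rewrite /F; have -> : (1 <= k <= n)%N by lia. by [].
- apply: eq_big_nat => k hk; rewrite /F'; have -> : (1 <= k <= n)%N by lia. by [].
Qed.

Lemma nondeg_val :
  rhs_sum R n w w0 = (phase (w - w0) - b) * (phase w ^+ n - b ^+ n) - b ^+ n.+1.
Proof.
rewrite RHS_eq.
have [h2 Hh2] : nice h.
  apply: nice_sum => k; apply: nice_scale; apply: nice_sum => j; apply: nice_scale; exact: nice_fkj.
rewrite (cftc cder_G Hh2).
have hq0 : q 0 = phase w - b by rewrite -hq rmorph0 mulr0 subr0.
have hq1 : q1 = phase (w - w0) - b by rewrite /q1 -hq rmorph1 mulr1.
have G1 : G 1 = 0.
  rewrite /G big_nat_cond big1 // => k /andP[/andP[k1 _] _].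
  rewrite /Gk /m rmorph1 mulN1r subrr mulr0 expr0n.
  case: k k1 => // k _ /=; ring.
have G0 : G 0 = \sum_(1 <= k < n.+1) 'C(n, k)%:R * b ^+ (n - k) * (- q1 * q 0 ^+ k + (- b) ^+ k.+1).
  apply: eq_bigr => k _; rewrite /Gk /m rmorph0 mulr0 addr0 mulr1 expr1n mulr1; by [].
rewrite G1 G0 sub0r -sumrN.
transitivity (q1 * \sum_(1 <= k < n.+1) 'C(n, k)%:R * b ^+ (n - k) * q 0 ^+ k +
   \sum_(1 <= k < n.+1) 'C(n, k)%:R * b ^+ (n - k) * (- (- b) ^+ k.+1)).
  rewrite mulr_sumr -big_split; apply: eq_bigr => k _; move: ('C(n, k)%:R : R[i]) (b ^+ (n - k)) (q 0 ^+ k) ((- b) ^+ k.+1) => X1 X2 X3 X4 /=; ring.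
rewrite binom1 sum_neg // hq0 hq1 (addrC b) subrK.
by [].
Qed.
End S6.

Unset Implicit Arguments.

Theorem lemma3p8 (R : realType) (n : nat) (hn : (1 <= n)%N) :
  exists c : nat -> nat -> R,
  forall w w0 : R[i], w0 != 0 -> w != 0 -> w != w0 ->
    phase (w ^+ n * (w - w0)) =
      phase (w0 * w ^+ n) + phase (w0 ^+ n * (w - w0)) +
      \sum_(1 <= k < n.+1) \sum_(1 <= j < n.+2)
         (c k j)%:C * phase w0 ^+ (n.+1 - j) *
         cint01 (fun t : R => phase (w - w0 * t%:C) ^+ j * ((1 - t) ^+ (k - 1))%:C).
Proof.
exists (fun k j => cc R n k j) => w w0 hw0 hw hww0.
have -> : \sum_(1 <= k < n.+1) \sum_(1 <= j < n.+2)
         (cc R n k j)%:C * phase w0 ^+ (n.+1 - j) *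
         cint01 (fun t : R => phase (w - w0 * t%:C) ^+ j * ((1 - t) ^+ (k - 1))%:C)
    = rhs_sum R n w w0 by [].
rewrite !phaseM !phaseX.
case: (eqVneq (w^* * w0 - w0^* * w) 0) => hD.
- have [ha hu hs] := deg_case n w w0 hn hw0 hw hww0 hD.
  rewrite hs ha hu exprS; ring.
- rewrite (nondeg_val R n w w0 hn hw0 hD) exprS; ring.
Qed.
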